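(* For the Thue-Morse word $t$, \[\limsup_{n\to\infty}\frac{PPL_t(n)}{\ln n}=\frac{3}{4\ln 2},\qquad \liminf_{n\to\infty}\frac{PPL_t(n)}{\ln n}=0.\]
   Context: The Thue-Morse word $t=t[1]t[2]\cdots=abbabaabbaababba\cdots$ is the fixed point starting with $a$ of the morphism $a\mapsto abba,\ b\mapsto baab$. A palindrome is a word $p=p[1]\cdots p[n]$ with $p[i]=p[n-i+1]$ for all $i$. $PPL_t(n)$ is the minimal number of nonempty palindromes whose concatenation equals the prefix of $t$ of length $n$. *)

(* Defs.v *)
From Stdlib Require Import Reals.
From Coquelicot Require Import Coquelicot.
From mathcomp Require Import all_boot.

Set Implicit Arguments.
Unset Strict Implicit.
Unset Printing Implicit Defensive.
Local Open Scope nat_scope.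

(* Letters: a = false, b = true. *)
Definition tm_morph (x : bool) : seq bool := [:: x; ~~ x; ~~ x; x].

Fixpoint tm_iter (k : nat) : seq bool :=
  match k with
  | 0 => [:: false]
  | k'.+1 => flatten (map tm_morph (tm_iter k'))
  end.

(* The prefix of length n of the Thue-Morse word t: since each tm_iter k is
   a prefix of tm_iter k.+1 and size (tm_iter n) = 4^n >= n, this is the
   prefix of length n of the fixed point. *)
Definition tm_prefix (n : nat) : seq bool := take n (tm_iter n).

Definition palindrome (p : seq bool) : bool := rev p == p.

Fixpoint pal_fact (k : nat) (w : seq bool) : bool :=
  match k with
  | 0 => w == [::]
  | k'.+1 => has (fun i => palindrome (take i w) && pal_fact k' (drop i w))
                 (iota 1 (size w))
  end.

Lemma pal_fact_exists (w : seq bool) : exists k, pal_fact k w.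
Proof.
exists (size w); elim: w => [|x w IH] //.
rewrite [size _]/= [pal_fact _ _]/=.
rewrite take0 drop0 IH andbT; apply/orP; left; exact: eqxx.
Qed.

Definition ppl (w : seq bool) : nat := ex_minn (pal_fact_exists w).

Definition PPL_t (n : nat) : nat := ppl (tm_prefix n).

(* Main.v *)
Require Import Defs.
From Stdlib Require Import Reals Lia Lra Psatz.
From Coquelicot Require Import Coquelicot.
From mathcomp Require Import all_boot zify.
Set Implicit Arguments.
Unset Strict Implicit.
Unset Printing Implicit Defensive.
Local Open Scope nat_scope.

Lemma size_flat_morph (s : seq bool) : size (flatten (map tm_morph s)) = 4 * size s.
Proof. elim: s => [|x s IH] //=. rewrite IH. lia. Qed.

Lemma size_tm_iter k : size (tm_iter k) = 4 ^ k.
Proof. elim: k => [|k IH] //=; rewrite size_flat_morph IH expnS. by []. Qed.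

Lemma flat_cons x (s : seq bool) :
  flatten (map tm_morph (x :: s)) = tm_morph x ++ flatten (map tm_morph s).
Proof. by []. Qed.

Lemma nth_flat_morph (s : seq bool) i j : j < 4 -> i < size s ->
  nth false (flatten (map tm_morph s)) (4 * i + j) = nth false (tm_morph (nth false s i)) j.
Proof.
move=> hj; elim: s i => [|x s IH] [|i] // hi; rewrite flat_cons.
- by rewrite nth_cat /= muln0 add0n hj.
- rewrite nth_cat /= ifF; last by lia.
  have -> : 4 * i.+1 + j - 4 = 4 * i + j by lia.
  by apply: IH.
Qed.

Lemma tm_iter_ext k : exists r, tm_iter k.+1 = tm_iter k ++ r.
Proof.
elim: k => [|k [r IH]]; first by exists [:: true; true; false].
exists (flatten (map tm_morph r)).
change (tm_iter k.+2) with (flatten (map tm_morph (tm_iter k.+1))).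
by rewrite {1}IH map_cat flatten_cat.
Qed.

Lemma nth_tm_iter_mono k k' i : k <= k' -> i < 4 ^ k ->
  nth false (tm_iter k') i = nth false (tm_iter k) i.
Proof.
move=> hk hi; elim: k' hk => [|k' IH] hk.
- by have -> : k = 0 by lia.
- case: (ltngtP k k'.+1) hk => // [hlt _|-> _]; last by [].
  case: (tm_iter_ext k') => r ->.
  rewrite nth_cat size_tm_iter ifT; first by apply: IH; lia.
  apply: (leq_trans hi); rewrite leq_exp2l //; lia.
Qed.

Definition tm (i : nat) : bool := nth false (tm_iter i) i.

Lemma ltn_4exp i : i < 4 ^ i.
Proof. by apply: ltn_expl. Qed.

Lemma tm_iterE k i : i < 4 ^ k -> nth false (tm_iter k) i = tm i.
Proof.
move=> hi; rewrite /tm -(@nth_tm_iter_mono k (maxn k i)) ?leq_maxl //.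
by rewrite -(@nth_tm_iter_mono i (maxn k i)) ?leq_maxr ?ltn_4exp.
Qed.

Lemma tm4 i j : j < 4 -> tm (4 * i + j) = nth false (tm_morph (tm i)) j.
Proof.
move=> hj; have hi := ltn_4exp i.
rewrite -(@tm_iterE i.+1); last by rewrite expnS; lia.
by rewrite /= nth_flat_morph // size_tm_iter.
Qed.

Lemma tm0 i : tm (4 * i) = tm i.
Proof. by rewrite -[4 * i]addn0 tm4. Qed.
Lemma tm1 i : tm (4 * i + 1) = ~~ tm i.
Proof. by rewrite tm4. Qed.
Lemma tm2 i : tm (4 * i + 2) = ~~ tm i.
Proof. by rewrite tm4. Qed.
Lemma tm3 i : tm (4 * i + 3) = tm i.
Proof. by rewrite tm4. Qed.

Definition seg a b := mkseq (fun i => tm (a + i)) (b - a).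

Lemma tm_prefixE n : tm_prefix n = seg 0 n.
Proof.
apply: (@eq_from_nth _ false).
  by rewrite size_take size_tm_iter size_mkseq subn0 ifT // ltn_4exp.
move=> i; rewrite size_take size_tm_iter ifT ?ltn_4exp // => hi.
by rewrite nth_take // nth_mkseq ?subn0 // add0n tm_iterE // (ltn_trans hi) // ltn_4exp.
Qed.

Definition palseg a b : Prop := forall q, a <= q < b -> tm q = tm (a + b - 1 - q).

Lemma size_seg a b : size (seg a b) = b - a.
Proof. by rewrite size_mkseq. Qed.

Lemma palindrome_seg a b : palindrome (seg a b) -> palseg a b.
Proof.
move=> /eqP hp q hq.
have hi : q - a < size (seg a b) by rewrite size_seg; lia.
have := congr1 (nth false ^~ (q - a)) hp.
rewrite nth_rev // size_seg !nth_mkseq; try lia.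
have -> : a + (q - a) = q by lia.
have -> : a + (b - a - (q - a).+1) = a + b - 1 - q by lia.
by move->.
Qed.

Lemma seg_palindrome a b : palseg a b -> palindrome (seg a b).
Proof.
move=> hp; apply/eqP; apply: (@eq_from_nth _ false); first by rewrite size_rev.
move=> i; rewrite size_rev size_seg => hi.
rewrite nth_rev ?size_seg // !nth_mkseq; try lia.
rewrite (hp (a + i)); last by lia.
by have -> : a + b - 1 - (a + i) = a + (b - a - i.+1) by lia.
Qed.

Lemma take_seg a b i : i <= b - a -> take i (seg a b) = seg a (a + i).
Proof.
move=> hi; apply: (@eq_from_nth _ false).
  by rewrite size_take !size_seg; case: ifP => hh; lia.
move=> j; rewrite size_take size_seg => hj.
have hj' : j < i by move: hj; case: ifP => hh; lia.
by rewrite nth_take // !nth_mkseq //; lia.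
Qed.

Lemma drop_seg a b i : drop i (seg a b) = seg (a + i) b.
Proof.
apply: (@eq_from_nth _ false); first by rewrite size_drop !size_seg; lia.
move=> j; rewrite size_drop size_seg => hj.
by rewrite nth_drop !nth_mkseq ?addnA //; lia.
Qed.

Fixpoint PF (k a b : nat) : Prop :=
  match k with
  | 0 => a = b
  | k'.+1 => exists c, [/\ a < c, c <= b, palseg a c & PF k' c b]
  end.

Lemma PF_le k a b : PF k a b -> a <= b.
Proof.
elim: k a => [|k IH] a /=; first by move->.
by case=> c [h1 h2 _ /IH h3]; lia.
Qed.

Lemma palfact_PF k a b : a <= b -> pal_fact k (seg a b) -> PF k a b.
Proof.
elim: k a => [|k IH] a hab /=.
  by move=> /eqP /(congr1 size); rewrite size_seg /=; lia.
case/hasP => i; rewrite mem_iota size_seg => hi /andP [hp hr].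
exists (a + i); split; try lia.
  by apply: palindrome_seg; rewrite -(@take_seg a b i) //; lia.
by apply: IH; [lia | rewrite -drop_seg].
Qed.

Lemma PF_palfact k a b : PF k a b -> pal_fact k (seg a b).
Proof.
elim: k a => [|k IH] a /=.
  by move=> ->; rewrite /seg subnn.
case=> c [h1 h2 hp hr]; apply/hasP; exists (c - a).
  by rewrite mem_iota size_seg; lia.
rewrite take_seg; last by lia.
rewrite drop_seg; have -> : a + (c - a) = c by lia.
by rewrite seg_palindrome // IH.
Qed.

Lemma PF_cat k l a b c : PF k a b -> PF l b c -> PF (k + l) a c.
Proof.
elim: k a => [|k IH] a /=; first by move->.
case=> d [h1 h2 hp hr] hl; exists d; split=> //; first by have := PF_le hl; lia.
exact: IH.
Qed.

Lemma PF_one a b : a < b -> palseg a b -> PF 1 a b.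
Proof. by move=> h hp; exists b. Qed.

Lemma PF_last k a b : PF k.+1 a b -> exists c, [/\ a <= c, c < b, PF k a c & palseg c b].
Proof.
elim: k a => [|k IH] a.
  by case=> c [h1 h2 hp /= hc]; subst c; exists a.
case=> c1 [h1 h2 hp hr]; case: (IH _ hr) => c [h3 h4 h5 h6].
exists c; split=> //; first lia.
by exists c1.
Qed.

Lemma palseg_trim a b k : palseg a b -> palseg (a + k) (b - k).
Proof.
move=> hp q hq; rewrite hp; last by lia.
by have -> : a + b - 1 - q = a + k + (b - k) - 1 - q by lia.
Qed.

Lemma palseg1 a : palseg a a.+1.
Proof. move=> q hq; have -> : q = a by lia. by have -> : a + a.+1 - 1 - a = a by lia. Qed.

Lemma palseg0 a : palseg a a.
Proof. by move=> q; lia. Qed.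

Lemma tm_mirror4 Q Q' j : j < 4 -> tm Q = tm Q' -> tm (4 * Q + j) = tm (4 * Q' + (3 - j)).
Proof.
case: j => [|[|[|[|j]]]] // _ h.
- by rewrite addn0 tm0 tm3 h.
- by rewrite tm1 tm2 h.
- by rewrite tm2 tm1 h.
- by rewrite tm3 subnn addn0 tm0 h.
Qed.

Lemma palseg4 a b : palseg a b -> palseg (4 * a) (4 * b).
Proof.
move=> hp q hq.
have hq' : q = 4 * (q %/ 4) + q %% 4 by lia.
have hj : q %% 4 < 4 by lia.
have hm : 4 * a + 4 * b - 1 - q = 4 * (a + b - 1 - q %/ 4) + (3 - q %% 4) by lia.
rewrite hm {1}hq'; apply: tm_mirror4 => //; apply: hp; lia.
Qed.

Lemma PF4 k a b : PF k a b -> PF k (4 * a) (4 * b).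
Proof.
elim: k a => [|k IH] a /=; first by move->.
case=> c [h1 h2 hp hr]; exists (4 * c); split; try lia.
  exact: palseg4.
exact: IH.
Qed.

Definition f n := PPL_t n.

Lemma f_spec n : PF (f n) 0 n /\ forall k, PF k 0 n -> f n <= k.
Proof.
rewrite /f /PPL_t /ppl; case: ex_minnP => m hm hmin; split.
  by apply: palfact_PF => //; rewrite -tm_prefixE.
by move=> k hk; apply: hmin; rewrite tm_prefixE; apply: PF_palfact.
Qed.

Lemma f_le k n : PF k 0 n -> f n <= k.
Proof. by case: (f_spec n) => _; apply. Qed.

Lemma f_PF n : PF (f n) 0 n.
Proof. by case: (f_spec n). Qed.

Lemma f0 : f 0 = 0.
Proof. by apply/eqP; rewrite -leqn0; apply: f_le. Qed.

Lemma f_pal a b : a <= b -> palseg a b -> f b <= f a + 1.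
Proof.
move=> hab hp; case: (ltngtP a b) hab => // [hlt|<-] _; last lia.
apply: f_le; apply: PF_cat (f_PF a) _; exact: PF_one.
Qed.

Lemma f_succ n : f n.+1 <= f n + 1.
Proof. apply: f_pal => //; exact: palseg1. Qed.

Lemma f_last n : 0 < n -> exists c, [/\ c < n, f c + 1 <= f n & palseg c n].
Proof.
move=> hn; have := f_PF n; case e: (f n) => [|k].
  by move=> /= h; lia.
case/PF_last => c [_ h1 h2 h3]; exists c; split=> //.
have := f_le h2; lia.
Qed.

Lemma f_pred n : f n <= f n.+1 + 1.
Proof.
case: (f_last (ltn0Sn n)) => c [h1 h2 h3].
have [hlt|hge] := ltnP c n; last by (have e : c = n by lia); subst c; lia.
have h4 := palseg_trim (k:=1) h3.
rewrite addn1 subn1 /= in h4.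
have h6 := f_succ c.
have : f n <= f c.+1 + 1 by apply: f_pal.
lia.
Qed.

Lemma pal2 x : tm x = tm x.+1 -> palseg x x.+2.
Proof.
move=> h q hq; have [->|->] : q = x \/ q = x.+1 by lia.
- by have -> : x + x.+2 - 1 - x = x.+1 by lia.
- by have -> : x + x.+2 - 1 - x.+1 = x by lia.
Qed.

Lemma pal12 m : palseg (4 * m + 1) (4 * m + 3).
Proof.
have -> : 4 * m + 3 = (4 * m + 1).+2 by lia.
by apply: pal2; rewrite tm1 -addn1 -addnA tm2.
Qed.

Lemma f_pal12 m : f (4 * m + 3) <= f (4 * m + 1) + 1.
Proof. apply: f_pal; [lia | exact: pal12]. Qed.

Lemma f4 m : f (4 * m) <= f m.
Proof. apply: f_le; have := PF4 (f_PF m); by rewrite muln0. Qed.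

Lemma fA1 m : f (4 * m + 1) <= f m + 1.
Proof.
have := f4 m; have := f_succ (4 * m).
have -> : (4 * m).+1 = 4 * m + 1 by lia. lia.
Qed.
Lemma fA2 m : f (4 * m + 2) <= f m + 2.
Proof.
have := fA1 m; have := f_succ (4 * m + 1).
have -> : (4 * m + 1).+1 = 4 * m + 2 by lia. lia.
Qed.
Lemma fA3 m : f (4 * m + 3) <= f m + 2.
Proof. have := fA1 m; have := f_pal12 m; lia. Qed.

Lemma fB m : [/\ f (4 * m + 3) <= f m.+1 + 1, f (4 * m + 2) <= f m.+1 + 2
              & f (4 * m + 1) <= f m.+1 + 2].
Proof.
case: (f_last (ltn0Sn m)) => c [h1 h2 h3].
have h4 := palseg4 h3.
have hc := f4 c.
have hc1 := f_succ (4 * c); have ee : (4 * c).+1 = 4 * c + 1 by lia. rewrite ee in hc1; clear ee.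
have hc2 := f_succ (4 * c + 1); have ee : (4 * c + 1).+1 = 4 * c + 2 by lia. rewrite ee in hc2; clear ee.
have hc3 := f_pal12 c.
split.
- have h5 := palseg_trim (k := 1) h4.
  have ee : 4 * m.+1 - 1 = 4 * m + 3 by lia. rewrite ee in h5; clear ee.
  have := f_pal (a := 4 * c + 1) (b := 4 * m + 3).
  move=> h; have := h ltac:(lia) h5; lia.
- have h5 := palseg_trim (k := 2) h4.
  have ee : 4 * m.+1 - 2 = 4 * m + 2 by lia. rewrite ee in h5; clear ee.
  have := f_pal (a := 4 * c + 2) (b := 4 * m + 2).
  move=> h; have := h ltac:(lia) h5; lia.
- have [hcm|hcm] := ltnP c m.
  + have h5 := palseg_trim (k := 3) h4.
    have ee : 4 * m.+1 - 3 = 4 * m + 1 by lia. rewrite ee in h5; clear ee.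
    have := f_pal (a := 4 * c + 3) (b := 4 * m + 1).
    move=> h; have := h ltac:(lia) h5; lia.
  + have e : c = m by lia. subst c. lia.
Qed.

Lemma f_pair_bound k n : n < 4 ^ k -> f n + f n.+1 <= 3 * k + 1.
Proof.
elim: k n => [|k IH] n hn.
  have -> : n = 0 by rewrite expn0 in hn; lia.
  have := f_succ 0; rewrite f0; lia.
have [m [r [e hr hm]]] : exists m r, [/\ n = 4 * m + r, r < 4 & m < 4 ^ k].
  by exists (n %/ 4), (n %% 4); rewrite expnS in hn; split; lia.
subst n; clear hn; have := IH _ hm; have := f4 m; have := fA1 m; have := fA2 m; have := fA3 m.
have := f4 m.+1; case: (fB m) => hb1 hb2 hb3.
case: r hr => [|[|[|[|r]]]] // _.
- rewrite addn0; have -> : (4 * m).+1 = 4 * m + 1 by lia. lia.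
- have -> : (4 * m + 1).+1 = 4 * m + 2 by lia. lia.
- have -> : (4 * m + 2).+1 = 4 * m + 3 by lia. lia.
- have -> : (4 * m + 3).+1 = 4 * m.+1 by lia. lia.
Qed.

Lemma f_upper k n : n < 4 ^ k -> 2 * f n <= 3 * k + 2.
Proof. move=> h; have := f_pair_bound h; have := f_pred n; lia. Qed.

Definition g n := minn (f (n %/ 4) + nth 0 [:: 0; 1; 2; 2] (n %% 4))
                       (f (n %/ 4).+1 + nth 0 [:: 1; 2; 2; 1] (n %% 4)).

Lemma g0 m : g (4 * m) = minn (f m) (f m.+1 + 1).
Proof.
rewrite /g; have -> : (4 * m) %/ 4 = m by lia.
have -> : (4 * m) %% 4 = 0 by lia. by rewrite addn0.
Qed.
Lemma g1 m : g (4 * m + 1) = minn (f m + 1) (f m.+1 + 2).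
Proof.
rewrite /g; have -> : (4 * m + 1) %/ 4 = m by lia.
by have -> : (4 * m + 1) %% 4 = 1 by lia.
Qed.
Lemma g2 m : g (4 * m + 2) = minn (f m + 2) (f m.+1 + 2).
Proof.
rewrite /g; have -> : (4 * m + 2) %/ 4 = m by lia.
by have -> : (4 * m + 2) %% 4 = 2 by lia.
Qed.
Lemma g3 m : g (4 * m + 3) = minn (f m + 2) (f m.+1 + 1).
Proof.
rewrite /g; have -> : (4 * m + 3) %/ 4 = m by lia.
by have -> : (4 * m + 3) %% 4 = 3 by lia.
Qed.

Lemma palsegE a b q q' : palseg a b -> a <= q < b -> q + q' = a + b - 1 -> tm q = tm q'.
Proof. move=> hp hq hs; rewrite hp //; congr tm; lia. Qed.

Lemma pal3 x : tm x = tm x.+2 -> palseg x x.+3.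
Proof.
move=> h q hq; have [->|[->|->]] : q = x \/ q = x.+1 \/ q = x.+2 by lia.
- by have -> : x + x.+3 - 1 - x = x.+2 by lia.
- by have -> : x + x.+3 - 1 - x.+1 = x.+1 by lia.
- by have -> : x + x.+3 - 1 - x.+2 = x by lia.
Qed.

Lemma pal5 x : tm x = tm (x + 4) -> tm x.+1 = tm (x + 3) -> palseg x (x + 5).
Proof.
move=> h1 h2 q hq.
have [->|[->|[->|[->|->]]]] : q = x \/ q = x.+1 \/ q = x.+2 \/ q = x + 3 \/ q = x + 4 by lia.
- by have -> : x + (x + 5) - 1 - x = x + 4 by lia.
- by have -> : x + (x + 5) - 1 - x.+1 = x + 3 by lia.
- by have -> : x + (x + 5) - 1 - x.+2 = x.+2 by lia.
- by have -> : x + (x + 5) - 1 - (x + 3) = x.+1 by lia.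
- by have -> : x + (x + 5) - 1 - (x + 4) = x by lia.
Qed.

Lemma no_pal5 q : ~ palseg q (q + 5).
Proof.
move=> hp.
have e1 : tm q = tm (q + 4) by apply: (palsegE hp); lia.
have e2 : tm (q + 1) = tm (q + 3) by apply: (palsegE hp); lia.
have [Q [j [eq hj]]] : exists Q j, q = 4 * Q + j /\ j < 4 by exists (q %/ 4), (q %% 4); lia.
subst q; clear hp; case: j hj e1 e2 => [|[|[|[|j]]]] // _.
- rewrite addn0 tm0 tm1 tm3 (_ : 4 * Q + 4 = 4 * Q.+1); last lia.
  by rewrite tm0; case: (tm Q).
- rewrite tm1 (_ : 4 * Q + 1 + 1 = 4 * Q + 2); last lia.
  rewrite tm2 (_ : 4 * Q + 1 + 4 = 4 * Q.+1 + 1); last lia.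
  rewrite (_ : 4 * Q + 1 + 3 = 4 * Q.+1); last lia.
  by rewrite tm1 tm0; case: (tm Q); case: (tm Q.+1).
- rewrite tm2 (_ : 4 * Q + 2 + 1 = 4 * Q + 3); last lia.
  rewrite tm3 (_ : 4 * Q + 2 + 4 = 4 * Q.+1 + 2); last lia.
  rewrite (_ : 4 * Q + 2 + 3 = 4 * Q.+1 + 1); last lia.
  by rewrite tm1 tm2; case: (tm Q); case: (tm Q.+1).
- rewrite (_ : 4 * Q + 3 + 1 = 4 * Q.+1); last lia.
  rewrite (_ : 4 * Q + 3 + 3 = 4 * Q.+1 + 2); last lia.
  by rewrite tm0 tm2; case: (tm Q.+1).
Qed.

Lemma pal_lift x y s : s < 4 -> palseg (4 * x + s) (4 * y - s) -> palseg x y.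
Proof.
move=> hs hp.
have key : forall q, x <= q -> 2 * q < x + y - 1 -> tm q = tm (x + y - 1 - q).
  move=> q h1 h2.
  have := palsegE (q := 4 * q + 3) (q' := 4 * (x + y - 1 - q)) hp.
  rewrite tm3 tm0; apply; lia.
move=> q hq.
have [h|h] := ltnP (2 * q) (x + y - 1); first by apply: key; lia.
have [h'|h'] := ltnP (2 * (x + y - 1 - q)) (x + y - 1).
  have := key (x + y - 1 - q) ltac:(lia) h'.
  by have -> : x + y - 1 - (x + y - 1 - q) = q by lia; move->.
by have -> : x + y - 1 - q = q by lia.
Qed.

Lemma edge_s x y s : s < 4 -> x < y -> palseg (4 * x + s) (4 * y - s) ->
  g (4 * y - s) <= g (4 * x + s) + 1.
Proof.
move=> hs hxy hp; have hQ := pal_lift hs hp.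
case: y hxy hp hQ => [|y] // hxy hp hQ.
have F1 : f y.+1 <= f x + 1 by apply: f_pal => //; lia.
have F2 : f y <= f x.+1 + 1.
  have [e|ne] := eqVneq y x; first by subst y; apply: f_pred.
  have := palseg_trim (k := 1) hQ; rewrite addn1 subn1 /= => h.
  apply: f_pal => //; lia.
have F3 := f_succ y.
case: s hs hp => [|[|[|[|s]]]] // _ _.
- by rewrite subn0 addn0 !g0; lia.
- rewrite (_ : 4 * y.+1 - 1 = 4 * y + 3); last lia. rewrite g3 g1; lia.
- rewrite (_ : 4 * y.+1 - 2 = 4 * y + 2); last lia. rewrite !g2; lia.
- rewrite (_ : 4 * y.+1 - 3 = 4 * y + 1); last lia. rewrite g1 g3; lia.
Qed.

Lemma edge_c2 i h : 1 <= h -> h <= 4 * i + 2 -> palseg (4 * i + 2 - h) (4 * i + 2 + h) ->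
  g (4 * i + 2 + h) <= g (4 * i + 2 - h) + 1.
Proof.
move=> h1 h2 hp.
case: h h1 h2 hp => [|[|[|h]]] // _ h2 hp.
- rewrite (_ : 4 * i + 2 - 1 = 4 * i + 1); last lia.
  rewrite (_ : 4 * i + 2 + 1 = 4 * i + 3); last lia. rewrite g1 g3; lia.
- rewrite (_ : 4 * i + 2 - 2 = 4 * i); last lia.
  rewrite (_ : 4 * i + 2 + 2 = 4 * i.+1); last lia. rewrite !g0; have := f_succ i; lia.
case: i h2 hp => [|p] h2 hp; first lia.
have e1 : tm p = tm p.+2.
  have := palsegE (q := 4 * p + 3) (q' := 4 * p.+2) hp; rewrite tm3 tm0; apply; lia.
have F := f_pal (a := p) (b := p.+3) ltac:(lia) (pal3 e1).
have := f_succ p; have := f_succ p.+1; have := f_succ p.+2.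
case: h h2 hp => [|[|[|[|h]]]] h2 hp.
- rewrite (_ : 4 * p.+1 + 2 - 3 = 4 * p + 3); last lia.
  rewrite (_ : 4 * p.+1 + 2 + 3 = 4 * p.+2 + 1); last lia. rewrite g3 g1; lia.
- rewrite (_ : 4 * p.+1 + 2 - 4 = 4 * p + 2); last lia.
  rewrite (_ : 4 * p.+1 + 2 + 4 = 4 * p.+2 + 2); last lia. rewrite !g2; lia.
- rewrite (_ : 4 * p.+1 + 2 - 5 = 4 * p + 1); last lia.
  rewrite (_ : 4 * p.+1 + 2 + 5 = 4 * p.+2 + 3); last lia. rewrite g1 g3; lia.
- rewrite (_ : 4 * p.+1 + 2 - 6 = 4 * p); last lia.
  rewrite (_ : 4 * p.+1 + 2 + 6 = 4 * p.+3); last lia. rewrite !g0; lia.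
- exfalso; case: p h2 hp e1 F => [|p] h2 hp e1 F; first lia.
  have e2 : tm p = tm (p + 4).
    have := palsegE (q := 4 * p + 3) (q' := 4 * (p + 4)) hp; rewrite tm3 tm0; apply; lia.
  apply: (@no_pal5 p); apply: pal5 => //.
  by rewrite e1; congr tm; lia.
Qed.

Lemma edge a b : a < b -> palseg a b -> g b <= g a + 1.
Proof.
move=> hab hp.
have [h [e|e]] : exists h, b - a = 2 * h \/ b - a = (2 * h).+1.
  by exists ((b - a) %/ 2); lia.
-
  have hc : tm (a + h - 1) = tm (a + h) by apply: (palsegE hp); lia.
  have [i [j [ec hj]]] : exists i j, a + h = 4 * i + j /\ j < 4.
    by exists ((a + h) %/ 4), ((a + h) %% 4); lia.
  case: j hj ec => [|[|[|[|j]]]] // _ ec.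
  + have := @edge_s (i - (h + 3) %/ 4) (i + (h + 3) %/ 4) (4 * ((h + 3) %/ 4) - h).
    rewrite (_ : 4 * (i - (h + 3) %/ 4) + (4 * ((h + 3) %/ 4) - h) = a); last lia.
    rewrite (_ : 4 * (i + (h + 3) %/ 4) - (4 * ((h + 3) %/ 4) - h) = b); last lia.
    apply=> //; lia.
  + exfalso; move: hc; rewrite ec (_ : 4 * i + 1 - 1 = 4 * i); last lia.
    by rewrite tm0 tm1; case: (tm i).
  + have := @edge_c2 i h; rewrite (_ : 4 * i + 2 - h = a); last lia.
    rewrite (_ : 4 * i + 2 + h = b); last lia. apply=> //; lia.
  + exfalso; move: hc; rewrite ec (_ : 4 * i + 3 - 1 = 4 * i + 2); last lia.
    by rewrite tm2 tm3; case: (tm i).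
-
  case: h e => [|[|h]] e.
  + rewrite (_ : b = a.+1); last lia.
    have [m [r [ea hr]]] : exists m r, a = 4 * m + r /\ r < 4 by exists (a %/ 4), (a %% 4); lia.
    subst a; have := f_succ m.
    case: r hr {hab hp e} => [|[|[|[|r]]]] // _.
    * rewrite addn0 (_ : (4 * m).+1 = 4 * m + 1); last lia. rewrite g0 g1; lia.
    * rewrite (_ : (4 * m + 1).+1 = 4 * m + 2); last lia. rewrite g1 g2; lia.
    * rewrite (_ : (4 * m + 2).+1 = 4 * m + 3); last lia. rewrite g2 g3; lia.
    * rewrite (_ : (4 * m + 3).+1 = 4 * m.+1 + 0); last lia. rewrite addn0 g0 g3; lia.
  + have ht : tm a = tm (a + 2) by apply: (palsegE hp); lia.
    rewrite (_ : b = a + 3); last lia.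
    have [m [r [ea hr]]] : exists m r, a = 4 * m + r /\ r < 4 by exists (a %/ 4), (a %% 4); lia.
    subst a; have := f_succ m; have := f_succ m.+1.
    case: r hr ht {hab hp e} => [|[|[|[|r]]]] // _ ht.
    * move: ht; rewrite addn0 tm0 tm2; by case: (tm m).
    * move: ht; rewrite tm1 (_ : 4 * m + 1 + 2 = 4 * m + 3); last lia.
      by rewrite tm3; case: (tm m).
    * rewrite (_ : 4 * m + 2 + 3 = 4 * m.+1 + 1); last lia. rewrite g2 g1; lia.
    * rewrite (_ : 4 * m + 3 + 3 = 4 * m.+1 + 2); last lia. rewrite g3 g2; lia.
  + exfalso; apply: (@no_pal5 (a + h)).
    have := palseg_trim (k := h) hp.
    by rewrite (_ : b - h = a + h + 5); last lia.
Qed.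

Lemma PF_g k a b : PF k a b -> g b <= g a + k.
Proof.
elim: k a => [|k IH] a /=; first by move->; lia.
case=> c [h1 h2 hp hr]; have := edge h1 hp; have := IH _ hr; lia.
Qed.

Lemma g_le_f n : g n <= f n.
Proof.
have := PF_g (f_PF n); rewrite -(muln0 4) g0 f0; lia.
Qed.

Lemma f_step c m : c <= f m -> c <= f m.+1 ->
  c + 3 <= f (16 * m + 6) /\ c + 3 <= f (16 * m + 7).
Proof.
move=> h1 h2.
have a1 := g_le_f (4 * m + 1); rewrite g1 in a1.
have a2 := g_le_f (4 * m + 2); rewrite g2 in a2.
have b1 := g_le_f (4 * (4 * m + 1) + 2); rewrite g2 in b1.
have b2 := g_le_f (4 * (4 * m + 1) + 3); rewrite g3 in b2.
rewrite (_ : (4 * m + 1).+1 = 4 * m + 2) in b1 b2; last lia.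
rewrite (_ : 4 * (4 * m + 1) + 2 = 16 * m + 6) in b1; last lia.
rewrite (_ : 4 * (4 * m + 1) + 3 = 16 * m + 7) in b2; last lia.
lia.
Qed.

Fixpoint mseq k := if k is k'.+1 then 16 * mseq k' + 6 else 2.

Lemma mseq_f k : 2 + 3 * k <= f (mseq k) /\ 2 + 3 * k <= f (mseq k).+1.
Proof.
elim: k => [|k [IH1 IH2]] /=.
  have h1 := g_le_f (4 * 0 + 1); have h2 := g_le_f (4 * 0 + 2).
  have h3 := g_le_f (4 * 0 + 3).
  rewrite g1 in h1; rewrite g2 in h2; rewrite g3 in h3.
  rewrite muln0 !add0n f0 in h1 h2 h3. lia.
have := f_step IH1 IH2; rewrite (_ : (16 * mseq k + 6).+1 = 16 * mseq k + 7); last lia.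
lia.
Qed.

Lemma mseq_bound k : k <= mseq k /\ 1 < mseq k /\ mseq k < 4 ^ (2 * k + 1).
Proof.
elim: k => [|k [h1 [h2 h3]]] //=.
rewrite (_ : 2 * k.+1 + 1 = (2 * k + 1).+2); last lia.
rewrite !expnS; lia.
Qed.

Lemma f_pow4 k : f (4 ^ k) <= 1.
Proof.
elim: k => [|k IH]; first by have := f_succ 0; rewrite f0 expn0.
by rewrite expnS; have := f4 (4 ^ k); lia.
Qed.

Open Scope R_scope.

Definition u (n : nat) : R := INR (PPL_t n) / ln (INR n).

Lemma inv_ln_small eps : 0 < eps ->
  exists N, forall n, (N <= n)%coq_nat -> 0 < ln (INR n) /\ / ln (INR n) < eps.
Proof.
move=> he.
have [N hN] := INR_archimed 1 (exp (/ eps)) Rlt_0_1.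
exists N => n hn.
have hn' : INR N <= INR n by apply: le_INR.
have hx : exp (/ eps) < INR n by lra.
have hpos : 0 < exp (/ eps) by apply: exp_pos.
have hl : / eps < ln (INR n).
  rewrite -{1}(ln_exp (/ eps)); apply: ln_increasing => //.
have hie : 0 < / eps by apply: Rinv_0_lt_compat.
split; first lra.
rewrite -(Rinv_inv eps); apply: Rinv_lt_contravar => //; nra.
Qed.

Lemma INR_4pow k : INR (4 ^ k)%N = 4 ^ k.
Proof.
elim: k => [|k IH]; first by rewrite expn0 /=.
rewrite expnS (_ : (4 * 4 ^ k)%N = Nat.mul 4 (4 ^ k)) // mult_INR IH /=; lra.
Qed.

Lemma ln4_pos : 0 < ln 4.
Proof. rewrite -ln_1; apply: ln_increasing; lra. Qed.

Lemma c_eq : 3 / (4 * ln 2) = 3 / (2 * ln 4).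
Proof.
have -> : (4 : R) = 2 * 2 by lra.
rewrite ln_mult; try lra. f_equal. ring.
Qed.

Lemma u_upper n : (2 <= n)%N ->
  INR (PPL_t n) <= 3 / (2 * ln 4) * ln (INR n) + 5 / 2.
Proof.
move=> hn.
set k := trunc_log 4 n.
have hk1 : (4 ^ k <= n)%N by apply: trunc_logP; lia.
have hk2 : (n < 4 ^ k.+1)%N by apply: trunc_log_ltn.
have hf := f_upper hk2.
have hf' : (2 * f n <= 3 * k + 5)%coq_nat by lia.
apply le_INR in hf'; rewrite mult_INR plus_INR mult_INR in hf'.
have hkl : INR k * ln 4 <= ln (INR n).
  rewrite -ln_pow; last lra.
  have hp : 0 < 4 ^ k by apply: pow_lt; lra.
  apply: ln_le => //; rewrite -INR_4pow; apply: le_INR; apply/leP.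
  exact: hk1.
have l4 := ln4_pos.
rewrite /f in hf'.
have e2 : INR 2 = 2 by simpl; lra.
have e3 : INR 3 = 3 by simpl; lra.
have e5 : INR 5 = 5 by simpl; lra.
rewrite e2 e3 e5 in hf'.
have : 3 * INR k <= 3 / (2 * ln 4) * ln (INR n) * 2.
  have -> : 3 / (2 * ln 4) * ln (INR n) * 2 = 3 * (ln (INR n) / ln 4) by field; lra.
  apply: Rmult_le_compat_l; first lra.
  apply: (Rmult_le_reg_r (ln 4)) => //.
  have -> : ln (INR n) / ln 4 * ln 4 = ln (INR n) by field; lra.
  lra.
lra.
Qed.

Lemma u_le n eps : (2 <= n)%N -> 0 < ln (INR n) -> / ln (INR n) < 2 / 5 * eps ->
  u n < 3 / (4 * ln 2) + eps.
Proof.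
move=> hn hl hi.
have hu := u_upper hn.
rewrite c_eq /u.
set L := ln (INR n) in hl hi hu *.
set c := 3 / (2 * ln 4) in hu *.
have hL : L * / L = 1 by field; lra.
have hIL : 0 < / L by apply: Rinv_0_lt_compat.
rewrite /Rdiv.
have : INR (PPL_t n) * / L <= (c * L + 5 / 2) * / L by apply: Rmult_le_compat_r; lra.
have -> : (c * L + 5 / 2) * / L = c + 5 / 2 * / L by field; lra.
lra.
Qed.

Lemma u_nonneg n : (2 <= n)%N -> 0 <= u n.
Proof.
move=> hn; rewrite /u /Rdiv; apply: Rmult_le_pos; first exact: pos_INR.
left; apply: Rinv_0_lt_compat; rewrite -ln_1; apply: ln_increasing; first lra.
have : (2 <= n)%coq_nat by apply/leP.
move/le_INR; simpl; lra.
Qed.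

Lemma u_mseq k : 3 / (4 * ln 2) <= u (mseq k).
Proof.
case: (mseq_bound k) => _ [h1 h2].
case: (mseq_f k) => hf _.
rewrite c_eq /u.
have l4 := ln4_pos.
have hm : 1 < INR (mseq k).
  have : (2 <= mseq k)%coq_nat by apply/leP.
  move/le_INR; simpl; lra.
have hL : 0 < ln (INR (mseq k)) by rewrite -ln_1; apply: ln_increasing; lra.
have hL2 : ln (INR (mseq k)) <= INR (2 * k + 1) * ln 4.
  rewrite -ln_pow; last lra.
  apply: ln_le; first lra.
  rewrite -INR_4pow; apply: le_INR; apply/leP; lia.
have hf' : (2 + 3 * k <= f (mseq k))%coq_nat by lia.
apply le_INR in hf'; rewrite plus_INR mult_INR in hf'.
rewrite (_ : INR (2 * k + 1) = 2 * INR k + 1) in hL2; last first.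
  rewrite (_ : (2 * k + 1)%N = (2 * k + 1)%coq_nat) //.
  rewrite plus_INR mult_INR; simpl; lra.
rewrite /f in hf'.
have e2 : INR 2 = 2 by simpl; lra.
have e3 : INR 3 = 3 by simpl; lra.
rewrite e2 e3 in hf'.
set L := ln (INR (mseq k)) in hL hL2 *.
apply: (Rmult_le_reg_r L) => //.
have -> : INR (PPL_t (mseq k)) / L * L = INR (PPL_t (mseq k)) by field; lra.
have -> : 3 / (2 * ln 4) * L = (3 / 2) * (L / ln 4) by field; lra.
have : L / ln 4 <= 2 * INR k + 1.
  apply: (Rmult_le_reg_r (ln 4)) => //.
  have -> : L / ln 4 * ln 4 = L by field; lra.
  lra.
lra.
Qed.

Lemma u_pow4 k : (1 <= k)%N -> u (4 ^ k) <= / ln (INR (4 ^ k)).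
Proof.
move=> hk; rewrite /u /Rdiv.
have h := f_pow4 k.
have hf : (f (4 ^ k) <= 1)%coq_nat by apply/leP.
apply le_INR in hf; rewrite /f in hf; simpl in hf.
have : 1 < INR (4 ^ k).
  rewrite INR_4pow.
  have h4 : 4 ^ 1 <= 4 ^ k by apply Rle_pow; [lra | apply/leP; exact hk].
  rewrite pow_1 in h4; lra.
move=> h1.
have hL : 0 < ln (INR (4 ^ k)) by rewrite -ln_1; apply: ln_increasing; lra.
have hi : 0 < / ln (INR (4 ^ k)) by apply: Rinv_0_lt_compat.
nra.
Qed.

From Coquelicot Require Import Coquelicot.

Theorem corollary16 :
  LimSup_seq (fun n : nat => INR (PPL_t n) / ln (INR n)) = Finite (3 / (4 * ln 2))
  /\ LimInf_seq (fun n : nat => INR (PPL_t n) / ln (INR n)) = Finite 0.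
Proof.
split.
- apply: is_LimSup_seq_unique => eps; split.
  + move=> N; exists (mseq N); split.
      by case: (mseq_bound N) => h _; apply/leP.
    have := u_mseq N; rewrite /u; have := cond_pos eps; lra.
  + have he : 0 < 2 / 5 * eps by have := cond_pos eps; lra.
    case: (inv_ln_small he) => N hN.
    exists (N + 2)%nat => n hn.
    case: (hN n ltac:(lia)) => h1 h2.
    apply: u_le => //; apply/leP; lia.
- apply: is_LimInf_seq_unique => eps; split.
  + move=> N.
    case: (inv_ln_small (cond_pos eps)) => N0 hN0.
    exists (4 ^ (N + N0).+1)%N; have hl := ltn_4exp (N + N0).+1; split; first by apply/leP; lia.
    have := u_pow4 (ltn0Sn (N + N0)); rewrite /u.
    case: (hN0 (4 ^ (N + N0).+1)%N ltac:(apply/leP; lia)) => _ h2.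
    lra.
  + exists (S (S O)) => n hn; have := u_nonneg (n := n) ltac:(apply/leP; lia).
    rewrite /u; have := cond_pos eps; lra.
Qed.
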